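(* Let $\alpha\in\mathbb R\setminus\{0\}$ and $\mathbf L=\mathbf a^2-\alpha^2\mathbf 1$ on $\mathcal H_a$. Define $\mathcal E^a_{\mathbf L}=\mathrm{Span}\{(\mathbf L^\dagger)^j|v\rangle\mid j\in\mathbb N,\ |v\rangle\in\ker\mathbf L\}$ and $\mathcal E^\sharp_{\mathbf L}=\mathrm{Span}\{(\mathbf L^\dagger)^j[\mathbf L,\mathbf L^\dagger]|v\rangle\mid j\in\mathbb N,\ |v\rangle\in\ker\mathbf L\}$. Then $\mathcal E^a_{\mathbf L}+\mathcal E^\sharp_{\mathbf L}$ is dense in $\mathcal H_a$.
   Context: $\mathcal H_a=L^2(\mathbb R,\mathbb C)$ with Fock basis $(|n\rangle)$, $\mathbf a=\frac1{\sqrt2}(x+\partial_x)$ the annihilation operator, $\mathbf a^\dagger$ the creation operator. $\ker\mathbf L$ is spanned by the coherent states $|\alpha\rangle,|-\alpha\rangle$, where $|z\rangle=e^{-|z|^2/2}\sum_n\frac{z^n}{\sqrt{n!}}|n\rangle$; these vectors lie in the domain of every polynomial in $\mathbf a,\mathbf a^\dagger$, so the expressions above are well defined, with $[\mathbf L,\mathbf L^\dagger]=\mathbf L\mathbf L^\dagger-\mathbf L^\dagger\mathbf L$. *)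

(* Defs.v *)
From Stdlib Require Import Reals.
From Coquelicot Require Import Coquelicot.

(* H_a = L^2(R,C) is identified, through the Fock basis (|n>), with
   l^2(N,C): a vector is its sequence of Fock coefficients. *)
Definition state := nat -> C.

Definition in_l2 (psi : state) : Prop :=
  ex_series (fun n => (Cmod (psi n)) ^ 2).

(* squared Hilbert norm (meaningful when in_l2 holds) *)
Definition normsq (psi : state) : R := Series (fun n => (Cmod (psi n)) ^ 2).

(* annihilation a|n> = sqrt n |n-1>, i.e. (a psi)_n = sqrt(n+1) psi_(n+1) *)
Definition ann (psi : state) : state :=
  fun n => Cmult (RtoC (sqrt (INR (S n)))) (psi (S n)).

(* creation a^dag|n> = sqrt(n+1)|n+1>, i.e. (a^dag psi)_n = sqrt n psi_(n-1) *)
Definition cre (psi : state) : state :=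
  fun n => match n with
           | O => RtoC 0
           | S m => Cmult (RtoC (sqrt (INR (S m)))) (psi m)
           end.

Definition Lop (alpha : R) (psi : state) : state :=
  fun n => Cminus (ann (ann psi) n) (Cmult (RtoC (alpha ^ 2)) (psi n)).

Definition Ldag (alpha : R) (psi : state) : state :=
  fun n => Cminus (cre (cre psi) n) (Cmult (RtoC (alpha ^ 2)) (psi n)).

Definition commLLdag (alpha : R) (psi : state) : state :=
  fun n => Cminus (Lop alpha (Ldag alpha psi) n) (Ldag alpha (Lop alpha psi) n).

Definition kerL (alpha : R) (v : state) : Prop :=
  in_l2 v /\ forall n, Lop alpha v n = RtoC 0.

Inductive span (S : state -> Prop) : state -> Prop :=
  | span_zero : span S (fun _ => RtoC 0)
  | span_gen : forall v, S v -> span S v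
  | span_add : forall u w, span S u -> span S w ->
      span S (fun n => Cplus (u n) (w n))
  | span_scal : forall (c : C) u, span S u ->
      span S (fun n => Cmult c (u n)).

Definition E_a (alpha : R) : state -> Prop :=
  span (fun phi => exists (j : nat) (v : state),
          kerL alpha v /\ phi = Nat.iter j (Ldag alpha) v).

Definition E_sharp (alpha : R) : state -> Prop :=
  span (fun phi => exists (j : nat) (v : state),
          kerL alpha v /\ phi = Nat.iter j (Ldag alpha) (commLLdag alpha v)).

Definition sum_sub (A B : state -> Prop) : state -> Prop :=
  fun phi => exists u w, A u /\ B w /\ phi = (fun n => Cplus (u n) (w n)).

Definition dense_in_H (A : state -> Prop) : Prop :=
  forall psi, in_l2 psi -> forall eps : R, 0 < eps ->
    exists phi, A phi /\ in_l2 (fun n => Cminus (psi n) (phi n)) /\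
      normsq (fun n => Cminus (psi n) (phi n)) < eps.

(* Main.v *)
Require Import Defs.
From Stdlib Require Import Reals Lra Lia Psatz FunctionalExtensionality.
From Coquelicot Require Import Coquelicot.
Open Scope R_scope.
Notation fact := Factorial.fact.

Definition sf (n:nat) : R := sqrt (INR (fact n)).
Definition emb (y : nat -> R) : state := fun n => RtoC (sf n * y n).
Definition shft (y : nat -> R) : nat -> R :=
  fun n => match n with O => 0 | S m => y m end.
Definition der (y : nat -> R) : nat -> R := fun n => INR (S n) * y (S n).

Lemma INR_fact_pos n : 0 < INR (fact n).
Proof. apply lt_0_INR, Factorial.lt_O_fact. Qed.

Lemma sf_S n : sf (S n) = sqrt (INR (S n)) * sf n.
Proof.
  unfold sf. change (fact (S n)) with (S n * fact n)%nat; rewrite mult_INR. apply sqrt_mult; apply pos_INR.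
Qed.

Lemma sf_sq n : sf n * sf n = INR (fact n).
Proof. unfold sf. apply sqrt_sqrt. apply pos_INR. Qed.

Lemma sf_pos n : 0 < sf n.
Proof. unfold sf. apply sqrt_lt_R0, INR_fact_pos. Qed.

Lemma cre_emb y : cre (emb y) = emb (shft y).
Proof.
  apply functional_extensionality; intros [|n]; unfold cre, emb, shft.
  - f_equal. ring.
  - rewrite <- RtoC_mult. f_equal. rewrite sf_S. ring.
Qed.

Lemma ann_emb y : ann (emb y) = emb (der y).
Proof.
  apply functional_extensionality; intros n; unfold ann, emb, der.
  rewrite <- RtoC_mult. f_equal. rewrite sf_S.
  rewrite <- (sqrt_sqrt (INR (S n))) at 3 by apply pos_INR. ring.
Qed.

Definition LopR (alpha : R) (y : nat -> R) : nat -> R :=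
  fun n => der (der y) n - alpha ^ 2 * y n.
Definition LdagR (alpha : R) (y : nat -> R) : nat -> R :=
  fun n => shft (shft y) n - alpha ^ 2 * y n.

Lemma Lop_emb a y : Lop a (emb y) = emb (LopR a y).
Proof.
  unfold Lop. rewrite !ann_emb. apply functional_extensionality; intros n.
  unfold emb, LopR. rewrite <- RtoC_mult, <- RtoC_minus. f_equal. ring.
Qed.

Lemma Ldag_emb a y : Ldag a (emb y) = emb (LdagR a y).
Proof.
  unfold Ldag. rewrite !cre_emb. apply functional_extensionality; intros n.
  unfold emb, LdagR. rewrite <- RtoC_mult, <- RtoC_minus. f_equal. ring.
Qed.

Lemma comm_emb a y : commLLdag a (emb y) =
  emb (fun n => LopR a (LdagR a y) n - LdagR a (LopR a y) n).
Proof.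
  unfold commLLdag. rewrite Ldag_emb, Lop_emb, Lop_emb, Ldag_emb.
  apply functional_extensionality; intros n.
  unfold emb. rewrite <- RtoC_minus. f_equal. ring.
Qed.

Definition B (a : R) (k n : nat) : R :=
  if (k <=? n)%nat then a ^ (n - k) / INR (fact (n - k)) else 0.

Lemma B0_eq a n : B a 0 n = a ^ n / INR (fact n).
Proof. unfold B. simpl. rewrite Nat.sub_0_r. reflexivity. Qed.

Lemma shft_B a k : shft (B a k) = B a (S k).
Proof. apply functional_extensionality; intros [|n]; reflexivity. Qed.

Lemma fact_S_INR n : INR (fact (S n)) = INR (S n) * INR (fact n).
Proof. change (fact (S n)) with (S n * fact n)%nat. apply mult_INR. Qed.

Lemma fact_neq n : INR (fact n) <> 0.
Proof. apply Rgt_not_eq, INR_fact_pos. Qed.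

Lemma LopR_B0 a n : LopR a (B a 0) n = 0.
Proof.
  unfold LopR, der. rewrite !B0_eq, !fact_S_INR.
  pose proof (fact_neq n). rewrite !S_INR. pose proof (pos_INR n).
  simpl. field. lra.
Qed.

Lemma comm_B0 a n :
  LopR a (LdagR a (B a 0)) n - LdagR a (LopR a (B a 0)) n =
  4 * a * B a 1 n + 2 * B a 0 n.
Proof.
  assert (H0 : LdagR a (LopR a (B a 0)) n = 0).
  { unfold LdagR. rewrite LopR_B0.
    destruct n as [|[|m]]; simpl; try rewrite LopR_B0; ring. }
  rewrite H0. unfold LopR, LdagR, der.
  destruct n as [|[|m]]; simpl shft.
  - unfold B; simpl. field.
  - unfold B; simpl. field.
  - change (B a 1 (S (S m))) with (B a 0 (S m)).
    rewrite !B0_eq, !fact_S_INR. pose proof (fact_neq m).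
    rewrite !S_INR. pose proof (pos_INR m). simpl. field. lra.
Qed.

Lemma cre_plus u w : cre (fun n => Cplus (u n) (w n)) = fun n => Cplus (cre u n) (cre w n).
Proof. apply functional_extensionality; intros [|n]; unfold cre; ring. Qed.
Lemma cre_scal c u : cre (fun n => Cmult c (u n)) = fun n => Cmult c (cre u n).
Proof. apply functional_extensionality; intros [|n]; unfold cre; ring. Qed.
Lemma cre_zero : cre (fun _ => RtoC 0) = fun _ => RtoC 0.
Proof. apply functional_extensionality; intros [|n]; unfold cre; ring. Qed.

Lemma span_Ldag a (G : state -> Prop) :
  (forall v, G v -> G (Ldag a v)) -> forall x, span G x -> span G (Ldag a x).
Proof.
  intros HG x Hx. induction Hx.
  - replace (Ldag a (fun _ => RtoC 0)) with (fun _ : nat => RtoC 0).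
    + apply span_zero.
    + unfold Ldag. rewrite !cre_zero. apply functional_extensionality; intros; ring.
  - apply span_gen, HG, H.
  - replace (Ldag a (fun n => Cplus (u n) (w n))) with
      (fun n => Cplus (Ldag a u n) (Ldag a w n)).
    + apply span_add; assumption.
    + unfold Ldag. rewrite !cre_plus. apply functional_extensionality; intros; ring.
  - replace (Ldag a (fun n => Cmult c (u n))) with
      (fun n => Cmult c (Ldag a u n)).
    + apply span_scal; assumption.
    + unfold Ldag. rewrite !cre_scal. apply functional_extensionality; intros; ring.
Qed.

Lemma span_crecre a (G : state -> Prop) :
  (forall v, G v -> G (Ldag a v)) -> forall x, span G x -> span G (cre (cre x)).
Proof.
  intros HG x Hx.
  replace (cre (cre x)) with
    (fun n => Cplus (Ldag a x n) (Cmult (RtoC (a ^ 2)) (x n))).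
  - apply span_add. apply span_Ldag; assumption. apply span_scal; assumption.
  - apply functional_extensionality; intros n; unfold Ldag. ring.
Qed.

Lemma emb_shft2 y : emb (shft (shft y)) = cre (cre (emb y)).
Proof. rewrite !cre_emb. reflexivity. Qed.

Lemma Ea_shft2 a y : E_a a (emb y) -> E_a a (emb (shft (shft y))).
Proof.
  intros H. rewrite emb_shft2. apply (span_crecre a); [|exact H].
  intros v [j [v0 [Hk ->]]]. exists (S j), v0. split; auto.
Qed.

Lemma Es_shft2 a y : E_sharp a (emb y) -> E_sharp a (emb (shft (shft y))).
Proof.
  intros H. rewrite emb_shft2. apply (span_crecre a); [|exact H].
  intros v [j [v0 [Hk ->]]]. exists (S j), v0. split; auto.
Qed.

Lemma ex_exp x : ex_series (fun n => x ^ n / INR (fact n)).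
Proof.
  exists (exp x). eapply is_series_ext; [|apply (is_exp_Reals x)].
  intros n. simpl. rewrite pow_n_pow. unfold scal; simpl. unfold mult; simpl.
  unfold Rdiv. ring.
Qed.

Lemma Cmod_emb_sq y n : (Cmod (emb y n)) ^ 2 = INR (fact n) * (y n) ^ 2.
Proof.
  unfold emb. rewrite Cmod_R.
  rewrite pow2_abs. rewrite <- sf_sq. ring.
Qed.

Lemma kerL_B0 a : kerL a (emb (B a 0)).
Proof.
  split.
  - unfold in_l2. eapply ex_series_ext; [|apply (ex_exp (a ^ 2))].
    intros n. rewrite Cmod_emb_sq, B0_eq. rewrite <- pow_mult.
    replace (2 * n)%nat with (n * 2)%nat by lia. rewrite pow_mult.
    assert (H := fact_neq n). cut ((a ^ n) ^ 2 / INR (fact n) = INR (fact n) * (a ^ n / INR (fact n)) ^ 2).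
    intros E; exact E. field. exact H.
  - intros n. rewrite Lop_emb. unfold emb. rewrite LopR_B0. f_equal. ring.
Qed.

Definition T a := sum_sub (E_a a) (E_sharp a).

Lemma T_lin a x y c d : T a x -> T a y ->
  T a (fun n => Cplus (Cmult c (x n)) (Cmult d (y n))).
Proof.
  intros [u1 [w1 [H1 [H2 ->]]]] [u2 [w2 [H3 [H4 ->]]]].
  exists (fun n => Cplus (Cmult c (u1 n)) (Cmult d (u2 n))),
         (fun n => Cplus (Cmult c (w1 n)) (Cmult d (w2 n))).
  split; [|split].
  - apply span_add; apply span_scal; assumption.
  - apply span_add; apply span_scal; assumption.
  - apply functional_extensionality; intros; ring.
Qed.

Lemma T_of_Ea a x : E_a a x -> T a x.
Proof.
  intros H. exists x, (fun _ => RtoC 0). split; [auto|split; [apply span_zero|]].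
  apply functional_extensionality; intros; ring.
Qed.
Lemma T_of_Es a x : E_sharp a x -> T a x.
Proof.
  intros H. exists (fun _ => RtoC 0), x. split; [apply span_zero|split; [auto|]].
  apply functional_extensionality; intros; ring.
Qed.

Lemma even_odd_B a : forall j,
  E_a a (emb (B a (2 * j))) /\
  E_sharp a (emb (fun n => 4 * a * B a (S (2 * j)) n + 2 * B a (2 * j) n)).
Proof.
  induction j as [|j [IH1 IH2]].
  - split.
    + apply span_gen. exists O, (emb (B a 0)). split; [apply kerL_B0|reflexivity].
    + apply span_gen. exists O, (emb (B a 0)). split; [apply kerL_B0|].
      simpl. rewrite comm_emb. f_equal. apply functional_extensionality; intros n.
      symmetry; apply comm_B0.
  - replace (2 * S j)%nat with (S (S (2 * j))) by lia. split.
    + rewrite <- !shft_B. apply Ea_shft2. exact IH1.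
    + replace (fun n => 4 * a * B a (S (S (S (2 * j)))) n + 2 * B a (S (S (2 * j))) n)
        with (shft (shft (fun n => 4 * a * B a (S (2 * j)) n + 2 * B a (2 * j) n))).
      * apply Es_shft2. exact IH2.
      * apply functional_extensionality; intros [|[|n]]; try reflexivity;
          unfold shft, B; simpl; ring.
Qed.

Lemma T_B a : a <> 0 -> forall k, T a (emb (B a k)).
Proof.
  intros Ha k. destruct (Nat.Even_or_Odd k) as [[j ->]|[j ->]].
  - apply T_of_Ea. apply even_odd_B.
  - destruct (even_odd_B a j) as [H1 H2].
    replace (emb (B a (2 * j + 1))) with
      (fun n => Cplus (Cmult (RtoC (/ (4 * a)))
          (emb (fun n => 4 * a * B a (S (2 * j)) n + 2 * B a (2 * j) n) n))
        (Cmult (RtoC (- (2 / (4 * a)))) (emb (B a (2 * j)) n))).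
    + apply T_lin. apply T_of_Es, H2. apply T_of_Ea, H1.
    + apply functional_extensionality; intros n. unfold emb.
      rewrite <- !RtoC_mult, <- RtoC_plus. f_equal.
      replace (2 * j + 1)%nat with (S (2 * j)) by lia. field. exact Ha.
Qed.

Fixpoint fsum (f : nat -> R) (N : nat) : R :=
  match N with O => 0 | S k => fsum f k + f k end.

Lemma fsum_sum_f f d : fsum f (S d) = sum_f_R0 f d.
Proof. induction d; simpl in *. ring. rewrite <- IHd. reflexivity. Qed.

Lemma fsum_ext f g N : (forall k, (k < N)%nat -> f k = g k) -> fsum f N = fsum g N.
Proof. induction N; intros H; simpl. reflexivity. rewrite IHN, H; auto. Qed.

Lemma fsum_zero_ext f d : (forall k, (d <= k)%nat -> f k = 0) ->
  forall K, (d <= K)%nat -> fsum f K = fsum f d.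
Proof.
  intros H K HK. induction HK. reflexivity. simpl. rewrite IHHK, H by lia. ring.
Qed.

Lemma fsum_nonneg f N : (forall k, 0 <= f k) -> 0 <= fsum f N.
Proof. intros H; induction N; simpl. lra. specialize (H N); lra. Qed.

Lemma fsum_mono_N f : (forall k, 0 <= f k) -> forall N M, (N <= M)%nat -> fsum f N <= fsum f M.
Proof. intros H N M HNM. induction HNM. lra. simpl. specialize (H m); lra. Qed.

Lemma fsum_ge_term f N k : (forall k, 0 <= f k) -> (k < N)%nat -> f k <= fsum f N.
Proof.
  intros H Hk. induction Hk; simpl.
  - pose proof (fsum_nonneg f k H); lra.
  - specialize (H m); lra.
Qed.

Lemma Rabs_fsum f N : Rabs (fsum f N) <= fsum (fun k => Rabs (f k)) N.
Proof.
  induction N; simpl. rewrite Rabs_R0; lra.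
  eapply Rle_trans. apply Rabs_triang. lra.
Qed.

Lemma binom_exp x y d :
  sum_f_R0 (fun k => x ^ k / INR (fact k) * (y ^ (d - k) / INR (fact (d - k)))) d
  = (x + y) ^ d / INR (fact d).
Proof.
  rewrite binomial. unfold Rdiv at 3. rewrite Rmult_comm, scal_sum.
  apply sum_eq. intros i Hi. unfold Binomial.C.
  pose proof (fact_neq i). pose proof (fact_neq (d - i)). pose proof (fact_neq d).
  field. auto.
Qed.

Lemma binomC_le n k : (k <= n)%nat -> Binomial.C n k <= 2 ^ n.
Proof.
  intros Hk. replace 2 with (1 + 1) by ring. rewrite binomial.
  rewrite <- fsum_sum_f.
  replace (Binomial.C n k) with (Binomial.C n k * 1 ^ k * 1 ^ (n - k)) by (rewrite !pow1; ring).
  apply (fsum_ge_term (fun i => Binomial.C n i * 1 ^ i * 1 ^ (n - i))) with (k := k); [|lia].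
  - intros i. rewrite !pow1. unfold Binomial.C.
    pose proof (INR_fact_pos n). pose proof (INR_fact_pos i). pose proof (INR_fact_pos (n - i)).
    rewrite Rmult_1_r, Rmult_1_r. apply Rlt_le, Rdiv_lt_0_compat; auto. apply Rmult_lt_0_compat; auto.
Qed.

Lemma fact_add_le m d :
  INR (fact (m + d)) <= 2 ^ (m + d) * INR (fact m) * INR (fact d).
Proof.
  pose proof (binomC_le (m + d) m ltac:(lia)). unfold Binomial.C in H.
  replace (m + d - m)%nat with d in H by lia.
  pose proof (INR_fact_pos m). pose proof (INR_fact_pos d).
  assert (0 < INR (fact m) * INR (fact d)) by (apply Rmult_lt_0_compat; auto).
  unfold Rdiv in H. apply Rmult_le_compat_r with (r := INR (fact m) * INR (fact d)) in H; [|lra].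
  rewrite Rmult_assoc, Rinv_l in H by lra. lra.
Qed.

Definition cf a k := (-a) ^ k / INR (fact k).
Definition Qy a m K n := fsum (fun k => cf a k * B a (m + k) n) K.
Definition dl (m n : nat) : R := if (n =? m)%nat then 1 else 0.
Definition W a m := INR (fact m) ^ 2 / (4 * a ^ 2) ^ m.
Definition tK a K n := if (K <=? n)%nat then (16 * a ^ 2) ^ n / INR (fact n) else 0.

Lemma B_add a m k d : B a (m + k) (m + d) = B a k d.
Proof. induction m; simpl; auto. Qed.
Lemma B_lt a k n : (n < k)%nat -> B a k n = 0.
Proof. intros H. unfold B. destruct (Nat.leb_spec k n); [lia|reflexivity]. Qed.
Lemma B_le a k n : (k <= n)%nat -> B a k n = a ^ (n - k) / INR (fact (n - k)).
Proof. intros H. unfold B. destruct (Nat.leb_spec k n); [reflexivity|lia]. Qed.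

Lemma fsum_0 N : fsum (fun _ => 0) N = 0.
Proof. induction N; simpl; [|rewrite IHN]; ring. Qed.

Lemma G_exact a d K : (d < K)%nat ->
  fsum (fun k => cf a k * B a k d) K = if (d =? 0)%nat then 1 else 0.
Proof.
  intros HK. rewrite (fsum_zero_ext _ (S d)) by (intros; try lia; rewrite B_lt by lia; ring).
  rewrite fsum_sum_f.
  rewrite (sum_eq _ (fun k => (-a) ^ k / INR (fact k) * (a ^ (d - k) / INR (fact (d - k)))))
    by (intros i Hi; unfold cf; rewrite B_le by lia; reflexivity).
  rewrite binom_exp. replace (-a + a) with 0 by ring.
  destruct d; [simpl; field|]. rewrite pow_i by lia.
  change ((S d =? 0)%nat) with false. unfold Rdiv; ring.
Qed.

Lemma G_bound a d K : (K <= S d)%nat ->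
  Rabs (fsum (fun k => cf a k * B a k d) K) <= (2 * Rabs a) ^ d / INR (fact d).
Proof.
  intros HK. eapply Rle_trans; [apply Rabs_fsum|].
  eapply Rle_trans; [apply (fsum_mono_N _ (fun k => Rabs_pos _) _ _ HK)|].
  rewrite fsum_sum_f.
  rewrite (sum_eq _ (fun k => (Rabs a) ^ k / INR (fact k) * ((Rabs a) ^ (d - k) / INR (fact (d - k))))).
  - rewrite binom_exp. replace (Rabs a + Rabs a) with (2 * Rabs a) by ring. lra.
  - intros i Hi. unfold cf. rewrite B_le by lia. unfold Rdiv.
    rewrite !Rabs_mult, !Rabs_inv, <- !RPow_abs, Rabs_Ropp.
    rewrite !(Rabs_pos_eq (INR _)) by apply pos_INR. reflexivity.
Qed.

Lemma alg0 F M D P X T : 0 < F -> 0 < M -> 0 < D -> 0 < P -> 0 < X -> 0 <= T ->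
  F <= T * M * D -> F * (X / D ^ 2) <= M ^ 2 / P * ((T ^ 2 * P * X) / F).
Proof.
  intros. apply Rminus_le.
  replace (F * (X / D ^ 2) - M ^ 2 / P * (T ^ 2 * P * X / F))
    with (- (X * ((T * M * D) ^ 2 - F ^ 2) / (F * D ^ 2))) by (field; lra).
  apply Rge_le, Ropp_0_le_ge_contravar. apply Rcomplements.Rdiv_le_0_compat.
  - apply Rmult_le_pos; [lra|]. nra.
  - apply Rmult_lt_0_compat; [lra|]. apply pow_lt; lra.
Qed.

Lemma W_nonneg a m : a <> 0 -> 0 <= W a m.
Proof.
  intros Ha. unfold W. apply Rmult_le_pos. apply pow2_ge_0.
  apply Rlt_le, Rinv_0_lt_compat, pow_lt. pose proof (pow2_gt_0 a Ha). lra.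
Qed.
Lemma tK_nonneg a K n : 0 <= tK a K n.
Proof.
  unfold tK. destruct (K <=? n)%nat; [|lra]. apply Rmult_le_pos.
  apply pow_le. pose proof (pow2_ge_0 a). lra.
  apply Rlt_le, Rinv_0_lt_compat, INR_fact_pos.
Qed.

Lemma err_bound a m K n : a <> 0 -> (1 <= K)%nat ->
  INR (fact n) * (Qy a m K n - dl m n) ^ 2 <= W a m * tK a K n.
Proof.
  intros Ha HK. pose proof (W_nonneg a m Ha). pose proof (tK_nonneg a K n).
  destruct (Nat.lt_ge_cases n m) as [Hnm|Hnm].
  - unfold Qy, dl. rewrite (fsum_ext _ (fun _ => 0)) by (intros; apply Rmult_eq_0_compat_l, B_lt; lia).
    rewrite fsum_0. destruct (Nat.eqb_spec n m); [lia|].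
    replace (INR (fact n) * (0 - 0) ^ 2) with 0 by ring. apply Rmult_le_pos; auto.
  - replace n with (m + (n - m))%nat by lia. set (d := (n - m)%nat).
    clearbody d. clear Hnm H0. pose proof (tK_nonneg a K (m + d)).
    unfold Qy. rewrite (fsum_ext _ (fun k => cf a k * B a k d)) by (intros; rewrite B_add; reflexivity).
    unfold dl. replace ((m + d =? m)%nat) with ((d =? 0)%nat)
      by (destruct (Nat.eqb_spec d 0); destruct (Nat.eqb_spec (m + d) m); auto; lia).
    destruct (Nat.lt_ge_cases d K) as [HdK|HdK].
    + rewrite G_exact by exact HdK.
      replace (INR (fact (m + d)) * ((if (d =? 0)%nat then 1 else 0) - (if (d =? 0)%nat then 1 else 0)) ^ 2) with 0 by ring.
      apply Rmult_le_pos; auto.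
    + destruct (Nat.eqb_spec d 0); [lia|]. rewrite Rminus_0_r.
      pose proof (G_bound a d K ltac:(lia)) as HG.
      set (G := fsum (fun k => cf a k * B a k d) K) in *.
      unfold tK. destruct (Nat.leb_spec K (m + d)); [|lia].
      assert (HG2 : G ^ 2 <= ((2 * Rabs a) ^ d / INR (fact d)) ^ 2).
      { rewrite <- pow2_abs. apply pow_incr. split; [apply Rabs_pos|exact HG]. }
      eapply Rle_trans. apply Rmult_le_compat_l; [apply pos_INR|exact HG2].
      assert (Hq : 0 < 4 * a ^ 2) by (pose proof (pow2_gt_0 a Ha); lra).
      replace (((2 * Rabs a) ^ d / INR (fact d)) ^ 2) with ((4 * a ^ 2) ^ d / INR (fact d) ^ 2).
      2:{ assert (E : ((2 * Rabs a) ^ d) ^ 2 = (4 * a ^ 2) ^ d).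
          { rewrite <- !pow_mult. rewrite Nat.mul_comm, pow_mult. f_equal.
            rewrite Rpow_mult_distr, pow2_abs. ring. }
          rewrite <- E. pose proof (fact_neq d). field. auto. }
      replace ((16 * a ^ 2) ^ (m + d)) with ((2 ^ (m + d)) ^ 2 * (4 * a ^ 2) ^ m * (4 * a ^ 2) ^ d).
      2:{ rewrite Rmult_assoc, <- pow_add. rewrite <- pow_mult, Nat.mul_comm, pow_mult.
          rewrite <- Rpow_mult_distr. f_equal. ring. }
      unfold W. apply alg0.
      * apply INR_fact_pos.
      * apply INR_fact_pos.
      * apply INR_fact_pos.
      * apply pow_lt; exact Hq.
      * apply pow_lt; exact Hq.
      * apply pow_le; lra.
      * apply fact_add_le.
Qed.

Definition tr (N : nat) (a : nat -> R) (n : nat) : R := if (N <=? n)%nat then a n else 0.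

Lemma tail_series a N : ex_series a -> is_series (tr N a) (Series a - fsum a N).
Proof.
  intros Ha. set (hd := fun n => if (N <=? n)%nat then 0 else a n).
  assert (Hhd : is_series hd (fsum a N)).
  { unfold is_series. apply filterlim_ext_loc with (fun _ => fsum a N); [|apply filterlim_const].
    exists N. intros n Hn. rewrite sum_n_Reals. rewrite <- fsum_sum_f.
    assert (Z : forall k, (N <= k)%nat -> hd k = 0).
    { intros k Hk. unfold hd. destruct (Nat.leb_spec N k); [reflexivity|lia]. }
    rewrite (fsum_zero_ext hd N Z (S n)) by lia.
    apply fsum_ext. intros k Hk. unfold hd. destruct (Nat.leb_spec N k); [lia|reflexivity]. }
  pose proof (is_series_minus _ _ _ _ (Series_correct _ Ha) Hhd) as H.
  replace (Series a - fsum a N) with (plus (Series a) (opp (fsum a N))) by reflexivity.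
  eapply is_series_ext; [|exact H]. intros n. unfold tr, hd.
  destruct (N <=? n)%nat; unfold plus, opp; simpl; ring.
Qed.

Lemma tail_small a : ex_series a -> forall eps, 0 < eps ->
  exists N, forall M, (N <= M)%nat -> Series (tr M a) < eps.
Proof.
  intros Ha eps He. pose proof (Series_correct _ Ha) as H.
  apply is_series_Reals in H. destruct (H eps He) as [N0 HN0].
  exists (S N0). intros M HM. destruct M as [|n]; [lia|].
  rewrite (is_series_unique _ _ (tail_series a (S n) Ha)).
  rewrite fsum_sum_f. specialize (HN0 n ltac:(lia)). unfold R_dist in HN0.
  rewrite Rabs_minus_sym in HN0. pose proof (Rle_abs (Series a - sum_f_R0 a n)). lra.
Qed.

Lemma is_series_lin u v lu lv x y : is_series u lu -> is_series v lv ->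
  is_series (fun n => x * u n + y * v n) (x * lu + y * lv).
Proof.
  intros Hu Hv. pose proof (is_series_plus _ _ _ _ (is_series_scal_l x _ _ Hu) (is_series_scal_l y _ _ Hv)) as H.
  exact H.
Qed.

Fixpoint fsumC (f : nat -> C) (N : nat) : C :=
  match N with O => RtoC 0 | S k => Cplus (fsumC f k) (f k) end.

Lemma fsumC_plus f g N : fsumC (fun m => Cplus (f m) (g m)) N = Cplus (fsumC f N) (fsumC g N).
Proof. induction N; simpl. ring. rewrite IHN. ring. Qed.

Lemma Cmod_fsumC f N : Cmod (fsumC f N) <= fsum (fun m => Cmod (f m)) N.
Proof.
  induction N; simpl. rewrite Cmod_0; lra.
  eapply Rle_trans. apply Cmod_triangle. lra.
Qed.

Lemma sq_fsum g N : (fsum g N) ^ 2 <= 2 ^ N * fsum (fun m => g m ^ 2) N.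
Proof.
  induction N. simpl; nra. cbn [fsum]. change (2 ^ S N) with (2 * 2 ^ N).
  assert (H1 : 1 <= 2 ^ N) by (apply pow_R1_Rle; lra).
  assert (H0 : 0 <= fsum (fun m => g m ^ 2) N) by (apply fsum_nonneg; intros; apply pow2_ge_0).
  set (s := fsum g N) in *. set (Q := fsum (fun m => g m ^ 2) N) in *.
  assert ((s + g N) ^ 2 <= 2 * s ^ 2 + 2 * g N ^ 2) by (pose proof (pow2_ge_0 (s - g N)); nra).
  pose proof (pow2_ge_0 (g N)). pose proof (Rmult_le_pos (2 ^ N - 1) (g N ^ 2) ltac:(lra) H2).
  nra.
Qed.

Lemma fsum_scal f x N : fsum (fun m => f m * x) N = fsum f N * x.
Proof. induction N; simpl. ring. rewrite IHN. ring. Qed.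

Lemma fsum_le f g N : (forall m, f m <= g m) -> fsum f N <= fsum g N.
Proof. intros H; induction N; simpl. lra. specialize (H N). lra. Qed.

Lemma Cmod_sub_sq x y : Cmod (Cminus x y) ^ 2 <= 2 * Cmod x ^ 2 + 2 * Cmod y ^ 2.
Proof.
  assert (H : Cmod (Cminus x y) <= Cmod x + Cmod y).
  { unfold Cminus. eapply Rle_trans. apply Cmod_triangle. rewrite Cmod_opp. lra. }
  pose proof (Cmod_ge_0 (Cminus x y)). pose proof (Cmod_ge_0 x). pose proof (Cmod_ge_0 y).
  assert (Cmod (Cminus x y) ^ 2 <= (Cmod x + Cmod y) ^ 2) by (apply pow_incr; lra).
  pose proof (pow2_ge_0 (Cmod x - Cmod y)). nra.
Qed.

Lemma T_zero a : a <> 0 -> T a (fun _ => RtoC 0).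
Proof.
  intros Ha. replace (fun _ : nat => RtoC 0) with
    (fun n => Cplus (Cmult (RtoC 0) (emb (B a 0) n)) (Cmult (RtoC 0) (emb (B a 0) n))).
  apply T_lin; apply T_B; auto.
  apply functional_extensionality; intros; ring.
Qed.

Lemma T_Qy a m K : a <> 0 -> T a (emb (Qy a m K)).
Proof.
  intros Ha. induction K.
  - replace (emb (Qy a m 0)) with (fun _ : nat => RtoC 0). apply T_zero; auto.
    apply functional_extensionality; intros n. unfold emb, Qy; simpl. f_equal. ring.
  - replace (emb (Qy a m (S K))) with
      (fun n => Cplus (Cmult (RtoC 1) (emb (Qy a m K) n)) (Cmult (RtoC (cf a K)) (emb (B a (m + K)) n))).
    + apply T_lin; auto. apply T_B; auto.
    + apply functional_extensionality; intros n. unfold emb, Qy; simpl.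
      rewrite <- !RtoC_mult, <- RtoC_plus. f_equal. ring.
Qed.

Lemma T_fsumC a (c : nat -> C) (x : nat -> state) : a <> 0 -> (forall m, T a (x m)) ->
  forall N, T a (fun n => fsumC (fun m => Cmult (c m) (x m n)) N).
Proof.
  intros Ha Hx N. induction N; simpl.
  - apply T_zero; auto.
  - replace (fun n => Cplus (fsumC (fun m => Cmult (c m) (x m n)) N) (Cmult (c N) (x N n))) with
      (fun n => Cplus (Cmult (RtoC 1) (fsumC (fun m => Cmult (c m) (x m n)) N)) (Cmult (c N) (x N n))).
    + apply T_lin; auto.
    + apply functional_extensionality; intros; ring.
Qed.

Lemma diag_sum (psi : state) n : forall N,
  fsumC (fun m => Cmult (Cmult (RtoC (/ sf m)) (psi m)) (RtoC (sf n * dl m n))) N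
  = if (N <=? n)%nat then RtoC 0 else psi n.
Proof.
  induction N; cbn [fsumC]. reflexivity.
  rewrite IHN. unfold dl. destruct (Nat.eqb_spec n N).
  - subst. rewrite Nat.leb_refl. destruct (Nat.leb_spec (S N) N); [lia|].
    rewrite Rmult_1_r. pose proof (sf_pos N).
    replace (Cmult (Cmult (RtoC (/ sf N)) (psi N)) (RtoC (sf N)))
      with (Cmult (Cmult (RtoC (/ sf N)) (RtoC (sf N))) (psi N)) by ring.
    rewrite <- RtoC_mult, Rinv_l by lra. ring.
  - rewrite Rmult_0_r.
    destruct (Nat.leb_spec N n); destruct (Nat.leb_spec (S N) n); try lia; ring.
Qed.

Theorem lemma8 (alpha : R) (halpha : alpha <> 0%R) :
  dense_in_H (sum_sub (E_a alpha) (E_sharp alpha)).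
Proof.
  intros psi Hpsi eps Heps.
  set (ap := fun n => Cmod (psi n) ^ 2).
  assert (Hap : ex_series ap) by exact Hpsi.
  destruct (tail_small ap Hap (eps / 4) ltac:(lra)) as [N HN].
  specialize (HN N (le_n N)).
  set (c := fun m => Cmult (RtoC (/ sf m)) (psi m)).
  set (V := fsum (fun m => Cmod (c m) ^ 2 * W alpha m) N).
  assert (HV : 0 <= V).
  { apply fsum_nonneg. intros m. apply Rmult_le_pos. apply pow2_ge_0. apply W_nonneg; auto. }
  set (Z := 2 ^ N * V).
  assert (HZ : 0 <= Z) by (apply Rmult_le_pos; [apply pow_le; lra|auto]).
  set (e := fun n => (16 * alpha ^ 2) ^ n / INR (fact n)).
  assert (He : ex_series e) by apply ex_exp.
  destruct (tail_small e He (eps / (4 * Z + 1)) ltac:(apply Rdiv_lt_0_compat; lra)) as [K0 HK0].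
  set (K := S K0). specialize (HK0 K ltac:(unfold K; lia)).
  assert (HtK : forall n, tK alpha K n = tr K e n) by reflexivity.
  set (phi := fun n => fsumC (fun m => Cmult (c m) (emb (Qy alpha m K) n)) N).
  exists phi.
  set (tl := fun n => if (N <=? n)%nat then psi n else RtoC 0).
  set (Err := fun m n => Qy alpha m K n - dl m n).
  assert (Hid : forall n, Cminus (psi n) (phi n) =
      Cminus (tl n) (fsumC (fun m => Cmult (c m) (emb (Err m) n)) N)).
  { intros n. unfold phi.
    replace (fun m => Cmult (c m) (emb (Qy alpha m K) n)) with
      (fun m => Cplus (Cmult (c m) (emb (Err m) n)) (Cmult (c m) (RtoC (sf n * dl m n)))).
    2:{ apply functional_extensionality; intros m. unfold emb, Err.
        replace (sf n * Qy alpha m K n) with (sf n * (Qy alpha m K n - dl m n) + sf n * dl m n) by ring.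
        rewrite RtoC_plus. ring. }
    rewrite fsumC_plus. unfold c. rewrite diag_sum. unfold tl.
    destruct (N <=? n)%nat; ring. }
  assert (Hpt : forall n, Cmod (Cminus (psi n) (phi n)) ^ 2 <= 2 * tr N ap n + (2 * Z) * tr K e n).
  { intros n. rewrite Hid. eapply Rle_trans; [apply Cmod_sub_sq|].
    assert (E1 : Cmod (tl n) ^ 2 = tr N ap n).
    { unfold tl, tr, ap. destruct (N <=? n)%nat; [reflexivity|rewrite Cmod_0; ring]. }
    set (X := fsum (fun m => Cmod (Cmult (c m) (emb (Err m) n))) N).
    assert (HX : Cmod (fsumC (fun m => Cmult (c m) (emb (Err m) n)) N) <= X) by apply Cmod_fsumC.
    assert (HX2 : Cmod (fsumC (fun m => Cmult (c m) (emb (Err m) n)) N) ^ 2 <= X ^ 2)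
      by (apply pow_incr; split; [apply Cmod_ge_0|exact HX]).
    pose proof (sq_fsum (fun m => Cmod (Cmult (c m) (emb (Err m) n))) N) as HS. fold X in HS.
    assert (HF : fsum (fun m => Cmod (Cmult (c m) (emb (Err m) n)) ^ 2) N <= V * tr K e n).
    { unfold V. rewrite <- fsum_scal. apply fsum_le. intros m.
      rewrite Cmod_mult, Rpow_mult_distr, Cmod_emb_sq. rewrite Rmult_assoc, <- HtK.
      apply Rmult_le_compat_l; [apply pow2_ge_0|]. unfold Err. apply err_bound; auto. unfold K; lia. }
    assert (0 <= 2 ^ N) by (apply pow_le; lra).
    assert (2 ^ N * fsum (fun m => Cmod (Cmult (c m) (emb (Err m) n)) ^ 2) N <= 2 ^ N * (V * tr K e n))
      by (apply Rmult_le_compat_l; auto).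
    unfold Z. rewrite E1. lra. }
  assert (HL1 := tail_series ap N Hap).
  assert (HL2 := tail_series e K He).
  rewrite (is_series_unique _ _ HL1) in HN.
  rewrite (is_series_unique _ _ HL2) in HK0.
  pose proof (is_series_lin _ _ _ _ 2 (2 * Z) HL1 HL2) as Hbd.
  set (bd := fun n => 2 * tr N ap n + 2 * Z * tr K e n) in Hbd.
  assert (Hnn : forall n, 0 <= Cmod (Cminus (psi n) (phi n)) ^ 2) by (intros; apply pow2_ge_0).
  assert (Hin : in_l2 (fun n => Cminus (psi n) (phi n))).
  { unfold in_l2. apply (@ex_series_le R_AbsRing R_CompleteNormedModule _ bd). intros n. change (norm ?x) with (Rabs x).
    rewrite Rabs_pos_eq by auto. apply Hpt. exists (2 * (Series ap - fsum ap N) + 2 * Z * (Series e - fsum e K)). exact Hbd. }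
  split; [|split; [exact Hin|]].
  - apply T_fsumC; auto. intros m. apply T_Qy; auto.
  - unfold normsq. eapply Rle_lt_trans.
    + apply (Series_le _ bd). intros n; split; [auto|apply Hpt]. exists (2 * (Series ap - fsum ap N) + 2 * Z * (Series e - fsum e K)). exact Hbd.
    + rewrite (is_series_unique _ _ Hbd).
      set (L1 := Series ap - fsum ap N) in *. set (L2 := Series e - fsum e K) in *.
      set (r := eps / (4 * Z + 1)) in *.
      assert (Hr : r * (4 * Z + 1) = eps) by (unfold r; field; lra).
      assert (0 < r) by (unfold r; apply Rdiv_lt_0_compat; lra).
      assert (2 * Z * L2 <= 2 * Z * r) by (apply Rmult_le_compat_l; lra).
      nra.
Qed.
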